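(* For any compact interval $\mathcal I\subset\mathbb R$ and any continuous piecewise linear function $f^*:\mathcal I\rightarrow\mathbb{R}$ with $P$ linear pieces ($P\in\mathbb N$), there exists a $\textsc{ReLU}$ network $f$ of width $2$ such that $f(x)=f^*(x)$ for all $x\in\mathcal I$.
   Context: A $\textsc{ReLU}$ network $f:\mathbb R\to\mathbb R$ is $t_L\circ\sigma_{L-1}\circ\cdots\circ\sigma_1\circ t_1$ with affine $t_\ell:\mathbb R^{d_{\ell-1}}\to\mathbb R^{d_\ell}$ ($d_0=d_L=1$) and coordinatewise $\textsc{ReLU}$ $\sigma_\ell$; its width is $\max\{d_1,\dots,d_{L-1}\}$. *)

(* Defs.v *)
From mathcomp Require Import all_boot all_order all_algebra.
From mathcomp Require Import all_classical all_reals all_analysis.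
Set Implicit Arguments. Unset Strict Implicit. Unset Printing Implicit Defensive.
Import Order.TTheory GRing.Theory Num.Theory numFieldNormedType.Exports.
Local Open Scope ring_scope.
Local Open Scope classical_set_scope.

Section ReLUNet.
Variable R : realType.

(* An affine layer t : R^din -> R^dout, x |-> W x + b.  Vectors are encoded
   as functions nat -> R; only coordinates i < dim are meaningful. *)
Record layer := Layer {
  ldin : nat;
  ldout : nat;
  lW : nat -> nat -> R;
  lb : nat -> R }.

Definition affine (l : layer) (x : nat -> R) : nat -> R :=
  fun i => \sum_(j < ldin l) lW l i j * x j + lb l i.

Definition relu (t : R) : R := Num.max t 0.
Definition relu_vec (x : nat -> R) : nat -> R := fun i => relu (x i).

(* A ReLU network R -> R is a nonempty list of affine layers t_1, ..., t_L
   (given as t1 and ts = [t_2; ...; t_L]) with d_0 = d_L = 1 and matching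
   consecutive dimensions. *)
Fixpoint chain_ok (d : nat) (ts : seq layer) : bool :=
  match ts with
  | [::] => d == 1%N
  | t :: ts' => (ldin t == d) && chain_ok (ldout t) ts'
  end.

Definition wf_net (t1 : layer) (ts : seq layer) : bool :=
  (ldin t1 == 1%N) && chain_ok (ldout t1) ts.

Definition eval_net (t1 : layer) (ts : seq layer) (x : R) : R :=
  (foldl (fun v t => affine t (relu_vec v)) (affine t1 (fun _ => x)) ts) 0%N.

Definition net_width (t1 : layer) (ts : seq layer) : nat :=
  \max_(d <- belast (ldout t1) (map ldout ts)) d.

Definition cpwl_pieces (a b : R) (P : nat) (f : R -> R) : Prop :=
  {within `[a, b], continuous f} /\
  exists xs : nat -> R,
    [/\ xs 0%N = a, xs P = b,
        (forall k, (k < P)%N -> xs k < xs k.+1) &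
        (forall k, (k < P)%N -> exists c d : R,
           forall x, xs k <= x <= xs k.+1 -> f x = c * x + d)].

End ReLUNet.

(* Main.v *)
Require Import Defs.
From mathcomp Require Import all_boot all_order all_algebra.
From mathcomp Require Import all_classical all_reals all_analysis.
From mathcomp Require Import ring lra.
Import Order.TTheory GRing.Theory Num.Theory.
Local Open Scope ring_scope.
Section Aux.
Variable R : realType.
Definition W2 (w00 w01 w10 w11 : R) : nat -> nat -> R :=
  fun i j => if i == 0%N then (if j == 0%N then w00 else w01)
             else (if j == 0%N then w10 else w11).
Definition B2 (b0 b1 : R) : nat -> R := fun i => if i == 0%N then b0 else b1.
Definition lay (din dout : nat) w00 w01 w10 w11 b0 b1 : layer R :=
  Layer din dout (W2 w00 w01 w10 w11) (B2 b0 b1).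
Lemma relu_id (t : R) : 0 <= t -> relu t = t.
Proof. by move=> h; rewrite /relu; apply/max_idPl. Qed.
Lemma relu_0 (t : R) : t <= 0 -> relu t = 0.
Proof. by move=> h; rewrite /relu; apply/max_idPr. Qed.
Lemma aff2_0 din dout w00 w01 w10 w11 b0 b1 (u : nat -> R) : din = 2%N ->
  affine (lay din dout w00 w01 w10 w11 b0 b1) u 0%N = w00 * u 0%N + w01 * u 1%N + b0.
Proof. by move=> ->; rewrite /affine /= !big_ord_recl big_ord0 /= addr0. Qed.
Lemma aff2_1 din dout w00 w01 w10 w11 b0 b1 (u : nat -> R) : din = 2%N ->
  affine (lay din dout w00 w01 w10 w11 b0 b1) u 1%N = w10 * u 0%N + w11 * u 1%N + b1.
Proof. by move=> ->; rewrite /affine /= !big_ord_recl big_ord0 /= addr0. Qed.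
Lemma aff1 dout w00 w01 w10 w11 b0 b1 (x : R) i :
  affine (lay 1 dout w00 w01 w10 w11 b0 b1) (fun _ => x) i = W2 w00 w01 w10 w11 i 0%N * x + B2 b0 b1 i.
Proof. by rewrite /affine /= big_ord1. Qed.
Section Main.
Variables (a b : R) (P : nat) (f : R -> R) (xs : nat -> R) (s dd : nat -> R).
Hypothesis xs0 : xs 0%N = a.
Hypothesis xsP : xs P = b.
Hypothesis xs_inc : forall k, (k < P)%N -> xs k < xs k.+1.
Hypothesis aff : forall k, (k < P)%N -> forall x, xs k <= x <= xs k.+1 -> f x = s k * x + dd k.

Definition L := \sum_(j < P) `|s j|.
Definition C := L * (b - a).
Definition m k (x : R) := if x <= xs k then x else xs k.

Lemma L_ge k : (k < P)%N -> `|s k| <= L.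
Proof. by move=> hk; rewrite /L (bigD1 (Ordinal hk)) //= lerDl sumr_ge0. Qed.
Lemma L_ge0 : 0 <= L.
Proof. by rewrite /L sumr_ge0. Qed.

Lemma m0 x : a <= x -> m 0 x = a.
Proof. rewrite /m xs0; case: ifPn => h hx //; lra. Qed.
Lemma m_le x k : m k x <= x.
Proof. rewrite /m; case: ifPn => h //; rewrite -ltNge in h; lra. Qed.
Lemma mP x : x <= b -> m P x = x.
Proof. by rewrite /m xsP => ->. Qed.
Lemma m_mono x k : (k < P)%N -> m k x <= m k.+1 x.
Proof.
move=> hk; have := xs_inc _ hk; rewrite /m; case: ifPn => h1; case: ifPn => h2 //;
 rewrite ?ltNge in h1 h2 *; lra.
Qed.
Lemma m_step x k : (k < P)%N -> f (m k.+1 x) = f (m k x) + s k * (m k.+1 x - m k x).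
Proof.
move=> hk; have := xs_inc _ hk; rewrite /m; case: ifPn => h1; case: ifPn => h2 hi.
- by rewrite subrr mulr0 addr0.
- rewrite -ltNge in h2; rewrite (aff _ hk x) ?(aff _ hk (xs k)) ?lexx; try lra; try (apply/andP; split; lra).
- rewrite -ltNge in h1; lra.
- rewrite -ltNge in h1 h2; rewrite (aff _ hk (xs k.+1)) ?(aff _ hk (xs k)) ?lexx; try lra; try (apply/andP; split; lra).
Qed.
Lemma relu_step x k : (k < P)%N -> relu (x - m k x - (xs k.+1 - xs k)) = x - m k.+1 x.
Proof.
move=> hk; have := xs_inc _ hk; rewrite /m; case: ifPn => h1; case: ifPn => h2 hi.
- rewrite subrr relu_0; lra.
- rewrite -ltNge in h2; lra.
- rewrite -ltNge in h1; rewrite relu_0; lra.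
- rewrite -ltNge in h1 h2; rewrite relu_id; lra.
Qed.
Lemma lip x k : (k <= P)%N -> a <= x -> `|f (m k x) - f a| <= L * (m k x - a).
Proof.
move=> + hx; elim: k => [|k IH] hk.
  by rewrite m0 // !subrr normr0 mulr0.
have hk' : (k < P)%N by [].
rewrite m_step // addrAC.
apply: (le_trans (ler_normD _ _)); rewrite normrM.
have hm := m_mono x _ hk'; have hL := L_ge _ hk'.
have e : L * (m k.+1 x - a) = L * (m k x - a) + L * (m k.+1 x - m k x) by ring.
rewrite e; apply: lerD; first exact: IH (ltnW hk).
rewrite (ger0_norm (_ : 0 <= m k.+1 x - m k x)); last lra.
apply: ler_wpM2r => //; lra.
Qed.
Definition Al k := lay 2 2 1 (s k) 0 1 0 (-(xs k.+1 - xs k)).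
Definition Bl k := lay 2 2 1 (- s k) 0 1 0 0.
Fixpoint layers k := if k is k'.+1 then layers k' ++ [:: Al k'; Bl k'] else [::].
Definition t1 := lay 1 2 0 0 1 0 C (-a).
Definition fin := lay 2 1 1 0 0 0 (f a - C) 0.
Definition stp (v : nat -> R) (t : layer R) := affine t (relu_vec v).

Lemma inv x k : (k <= P)%N -> a <= x <= b ->
  let v := foldl stp (affine t1 (fun _ => x)) (layers k) in
  v 0%N = f (m k x) - f a + C /\ v 1%N = x - m k x.
Proof.
move=> + /andP[hxa hxb]; elim: k => [|k IH] hk.
  by rewrite /= !aff1 /W2 /B2 /= m0 // subrr mul0r !add0r mul1r.
have hk' : (k < P)%N by [].
have [h0 h1] := IH (ltnW hk).
rewrite /= foldl_cat /=.
set v := foldl _ _ _ in h0 h1 *.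
have hL := L_ge _ hk'; have hL0 := L_ge0.
have hlip := lip x k (ltnW hk) hxa.
have hml := m_le x k.
have hv0 : 0 <= v 0%N.
  rewrite h0 /C.
  have : - (L * (m k x - a)) <= f (m k x) - f a by move: hlip; rewrite ler_norml => /andP[].
  have : 0 <= L * (b - m k x) by apply: mulr_ge0; lra.
  move=> *; nra.
have hv1 : 0 <= v 1%N by rewrite h1; lra.
have hu0 : 0 <= relu (v 0%N) + s k * relu (v 1%N).
  rewrite !relu_id // h0 h1 /C.
  have : - (L * (m k x - a)) <= f (m k x) - f a by move: hlip; rewrite ler_norml => /andP[].
  have : 0 <= L * (b - x) by apply: mulr_ge0; lra.
  have : - (L * (x - m k x)) <= s k * (x - m k x).
    rewrite -mulNr; apply: ler_wpM2r; [lra | have := ler_norm (- s k); rewrite normrN; lra].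
  move=> *; nra.
rewrite /stp /relu_vec !aff2_0 // !aff2_1 // /=.
rewrite !mul1r !mul0r !add0r !addr0.
rewrite [relu (_ + _)]relu_id // h1 [relu (x - m k x)]relu_id; last lra.
rewrite relu_step // relu_id // ?h0. 
split=> //.
rewrite m_step //; ring.
Qed.
Lemma chain_layers k s0 : chain_ok 2 (layers k ++ s0) = chain_ok 2 s0.
Proof. by elim: k s0 => //= k IH s0; rewrite -catA IH. Qed.
Lemma ldout_layers k : all (fun d => d == 2%N) (map (@ldout R) (layers k)).
Proof. by elim: k => //= k IH; rewrite map_cat all_cat IH. Qed.
Lemma max2 (l : seq nat) : all (fun d => d == 2%N) l -> (\max_(d <- l) d <= 2)%N.
Proof.
elim: l => [|y l IH]; rewrite ?big_nil ?big_cons //= => /andP[/eqP -> h].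
by rewrite geq_max leqnn IH.
Qed.

Lemma main_sec : a <= b ->
  exists (t1 : layer R) (ts : seq (layer R)),
    [/\ wf_net t1 ts, net_width t1 ts = 2%N &
        forall x, a <= x <= b -> eval_net t1 ts x = f x].
Proof.
move=> hab; exists t1, (layers P ++ [:: fin]); split.
- by rewrite /wf_net /= chain_layers.
- rewrite /net_width /= map_cat /= cats1 belast_rcons big_cons.
  by apply/maxn_idPl; apply: max2; apply: ldout_layers.
move=> x hx; have /andP[hxa hxb] := hx.
have -> : eval_net t1 (layers P ++ [:: fin]) x =
  stp (foldl stp (affine t1 (fun _ => x)) (layers P)) fin 0%N by rewrite /eval_net foldl_cat.
have [h0 _] := inv x P (leqnn P) hx.
set v := foldl _ _ _ in h0 *.
have hlip := lip x P (leqnn P) hxa.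
rewrite mP // in h0 hlip.
have hL0 := L_ge0.
have hv0 : 0 <= v 0%N.
  rewrite h0 /C.
  have : - (L * (x - a)) <= f x - f a by move: hlip; rewrite ler_norml => /andP[].
  have : 0 <= L * (b - x) by apply: mulr_ge0; lra.
  move=> *; nra.
rewrite /stp /relu_vec aff2_0 // relu_id // h0; ring.
Qed.
End Main.
End Aux.

Theorem lemma10 (R : realType) (a b : R) (P : nat) (fstar : R -> R) :
  a <= b -> cpwl_pieces a b P fstar ->
  exists (t1 : layer R) (ts : seq (layer R)),
    [/\ wf_net t1 ts, net_width t1 ts = 2%N &
        forall x, a <= x <= b -> eval_net t1 ts x = fstar x].
Proof.
move=> hab [_ [xs [xs0 xsP xs_inc H]]].
have : forall k, exists cd : R * R, (k < P)%N ->
    forall x, xs k <= x <= xs k.+1 -> fstar x = cd.1 * x + cd.2.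
  move=> k; case: (ltnP k P) => hk.
    by have [c [d h]] := H k hk; exists (c, d).
  by exists (0, 0).
case/boolp.choice => g hg.
apply: (@main_sec R a b P fstar xs (fun k => (g k).1) (fun k => (g k).2)) => //.
Qed.
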